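(* Let $n\ge 0$ and $\mathbf{x}\in\mathbb{R}^{n+1}$ with $0\le\mathbf{x}_0<\mathbf{x}_1<\dots<\mathbf{x}_n\le 1$. Define the $(n+1)\times(n+1)$ matrices (indices $0\le i,j\le n$) $$H^n_{ij}=\binom{n+1}{i+j+1},\qquad \widetilde H^n_{ij}(\mathbf{x})=\sum_{k=0}^{i+j+1}(-1)^{n-k+1}\binom{n-k+1}{n-i-j}\sigma_{n-k+1}(\mathbf{x}),$$ $$T^n_{ij}=\binom{n+1}{j-i},\qquad \widetilde T^n_{ij}(\mathbf{x})=\sum_{k=0}^{j-i}(-1)^{n-k+1}\binom{n-k+1}{j-i-k}\sigma_{n-k+1}(\mathbf{x}),$$ $$D^n(\mathbf{x})=\mathrm{diag}\Big(\prod_{i\in\{0,\dots,n\}\setminus\{j\}}(\mathbf{x}_j-\mathbf{x}_i)\Big)_{j=0}^n,\qquad \Delta^n=\mathrm{diag}\Big(\binom{n}{j}\Big)_{j=0}^n,$$ and $\widetilde V^n_{ij}(\mathbf{x})=\mathbf{x}_i^j(1-\mathbf{x}_i)^{n-j}$. Then $$(V^n(\mathbf{x}))^{-1}=(\Delta^n)^{-1}\big[\widetilde H^n(\mathbf{x})T^n-H^n\widetilde T^n(\mathbf{x})\big](\widetilde V^n(\mathbf{x}))^T(D^n(\mathbf{x}))^{-1}.$$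
   Context: $V^n(\mathbf{x})$ is the Bernstein–Vandermonde matrix with entries $V^n_{ij}(\mathbf{x})=B^n_j(\mathbf{x}_i)$, where $B^n_j(x)=\binom{n}{j}x^j(1-x)^{n-j}$. $\sigma_k(\mathbf{x})$ is the $k$-th elementary symmetric function of $\mathbf{x}_0,\dots,\mathbf{x}_n$: $\sigma_0=1$ and $\sigma_k(\mathbf{x})=\sum_{0\le i_0<\dots<i_{k-1}\le n}\mathbf{x}_{i_0}\cdots\mathbf{x}_{i_{k-1}}$ for $1\le k\le n+1$. Conventions: $\binom{a}{b}=0$ if $b<0$ or $b>a$ (in particular $T^n,\widetilde T^n$ are upper triangular, and empty sums are $0$); $0^0=1$. *)

(* Defs.v *)
From HB Require Import structures.
From mathcomp Require Import all_boot all_order all_algebra.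
Set Implicit Arguments. Unset Strict Implicit. Unset Printing Implicit Defensive.
Import Order.TTheory GRing.Theory Num.Theory.
Local Open Scope ring_scope.

Definition binz (a b : int) : nat :=
  match a, b with
  | Posz a', Posz b' => 'C(a', b')
  | _, _ => 0%N
  end.

Section Defs.
Variable (R : fieldType) (n : nat) (x : 'I_n.+1 -> R).

Definition esym (k : nat) : R :=
  \sum_(A : {set 'I_n.+1} | #|A| == k) \prod_(i in A) x i.

Definition esymz (k : int) : R :=
  match k with Posz k' => esym k' | Negz _ => 0 end.

Definition signz (m : int) : R := (-1) ^ m.

Definition BV : 'M[R]_n.+1 :=
  \matrix_(i, j) ('C(n, j)%:R * x i ^+ j * (1 - x i) ^+ (n - j)).

Definition BVt : 'M[R]_n.+1 :=
  \matrix_(i, j) (x i ^+ j * (1 - x i) ^+ (n - j)).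

Definition Hmx : 'M[R]_n.+1 :=
  \matrix_(i, j) (binz n.+1 (i + j + 1)%N)%:R.

Definition Htmx : 'M[R]_n.+1 :=
  \matrix_(i < n.+1, j < n.+1)
    \sum_(k < (i + j + 1).+1)
      signz (n%:Z - k%:Z + 1) * (binz (n%:Z - k%:Z + 1) (n%:Z - i%:Z - j%:Z))%:R
        * esymz (n%:Z - k%:Z + 1).

Definition Tmx : 'M[R]_n.+1 :=
  \matrix_(i, j) (binz n.+1 (j%:Z - i%:Z))%:R.

(* sum over 0 <= k <= j - i (empty when j < i) *)
Definition Ttmx : 'M[R]_n.+1 :=
  \matrix_(i < n.+1, j < n.+1)
    \sum_(k < n.+1 | k%:Z <= j%:Z - i%:Z)
      signz (n%:Z - k%:Z + 1) * (binz (n%:Z - k%:Z + 1) (j%:Z - i%:Z - k%:Z))%:R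
        * esymz (n%:Z - k%:Z + 1).

Definition Dmx : 'M[R]_n.+1 :=
  diag_mx (\row_j \prod_(i < n.+1 | i != j) (x j - x i)).

Definition Deltamx : 'M[R]_n.+1 :=
  diag_mx (\row_(j < n.+1) ('C(n, j))%:R).

End Defs.

(* Main.v *)
Require Import Defs.
From HB Require Import structures.
From mathcomp Require Import all_boot all_order all_algebra.
From mathcomp Require Import zify ring lra.
Require Import Defs.
Set Implicit Arguments. Unset Strict Implicit. Unset Printing Implicit Defensive.
Import Order.TTheory GRing.Theory Num.Theory.
Local Open Scope ring_scope.


Section Gen.
Variable S : comPzRingType.
Variable n : nat.
Variables u v p q : S.

Definition UU i := u ^+ i * v ^+ (n - i).
Definition QQ j := p ^+ j * q ^+ (n - j).
Definition TT a b l :=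
  u ^+ (a - l) * v ^+ (n.+1 - a + l) * p ^+ (b + l) * q ^+ (n.+1 - b - l).
Definition S1 a b := \sum_(l < minn a (n.+1 - b)) UU (a - 1 - l) * QQ (b + l).

Lemma tstep a b m : (a <= n.+1)%N -> (m < a)%N -> (m < n.+1 - b)%N ->
  (u * q - v * p) * (UU (a-1-m) * QQ (b+m)) = TT a b m - TT a b m.+1.
Proof.
move=> hA ha hb; rewrite /UU /QQ /TT.
have -> : (a - m = (a - 1 - m).+1)%N by lia.
have -> : (n.+1 - a + m = n - (a - 1 - m))%N by lia.
have -> : (n.+1 - b - m = (n - (b + m)).+1)%N by lia.
have -> : (a - m.+1 = a - 1 - m)%N by lia.
have -> : (n.+1 - a + m.+1 = (n - (a - 1 - m)).+1)%N by lia.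
have -> : (b + m.+1 = (b + m).+1)%N by lia.
have -> : (n.+1 - b - m.+1 = n - (b + m))%N by lia.
rewrite !exprS; ring.
Qed.

Lemma tele a b m : (a <= n.+1)%N -> (m <= a)%N -> (m <= n.+1 - b)%N ->
  (u * q - v * p) * \sum_(l < m) UU (a-1-l) * QQ (b+l) = TT a b 0 - TT a b m.
Proof.
move=> hA; elim: m => [|m IH] ha hb; first by rewrite big_ord0 mulr0 subrr.
rewrite big_ord_recr /= mulrDr IH ?(ltnW ha) ?(ltnW hb) // tstep //.
by rewrite addrA subrK.
Qed.

Definition UP a := u ^+ a * v ^+ (n.+1 - a).
Definition QP b := p ^+ b * q ^+ (n.+1 - b).

Lemma pairS a b : (a <= n.+1)%N -> (b <= n.+1)%N ->
  (u * q - v * p) * (S1 a b - S1 b a) = UP a * QP b - UP b * QP a.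
Proof.
move=> ha hb; rewrite mulrBr /S1 !tele ?geq_minl ?geq_minr //.
have E : TT a b (minn a (n.+1 - b)) = TT b a (minn b (n.+1 - a)).
  rewrite /TT; case: (leqP (a + b) n.+1) => hab.
    have -> : minn a (n.+1 - b) = a by lia.
    have -> : minn b (n.+1 - a) = b by lia.
    have -> : (a - a = b - b)%N by lia.
    have -> : (n.+1 - a + a = n.+1 - b + b)%N by lia.
    have -> : (b + a = a + b)%N by lia.
    by have -> : (n.+1 - b - a = n.+1 - a - b)%N by lia.
  have -> : minn a (n.+1 - b) = (n.+1 - b)%N by lia.
  have -> : minn b (n.+1 - a) = (n.+1 - a)%N by lia.
  have -> : (a - (n.+1 - b) = b - (n.+1 - a))%N by lia.
  have -> : (n.+1 - a + (n.+1 - b) = n.+1 - b + (n.+1 - a))%N by lia.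
  have -> : (b + (n.+1 - b) = a + (n.+1 - a))%N by lia.
  by have -> : (n.+1 - b - (n.+1 - b) = n.+1 - a - (n.+1 - a))%N by lia.
rewrite E /TT /UP /QP !subn0 !addn0; ring.
Qed.


Lemma shiftI (h : nat -> S) l : (l < n.+1)%N -> (forall a, (n.+1 < a)%N -> h a = 0) ->
  \sum_(i < n.+1) h (i + l.+1)%N = \sum_(a < n.+2) (if (l < a)%N then h a else 0).
Proof.
move=> hl hz.
rewrite -(big_mkord xpredT (fun i => h (i + l.+1)%N)).
rewrite -(big_mkord xpredT (fun a => if (l < a)%N then h a else 0)).
have := big_addn 0 (n.+1 + l.+1) l.+1 xpredT h.
rewrite addnK add0n => <-.
rewrite (big_cat_nat (n := n.+2)); last by lia. 2: by lia.
rewrite [X in _ = X](big_cat_nat (n := l.+1)); last by lia. 2: by lia.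
rewrite /=.
rewrite [X in _ + X = _]big_nat_cond [X in _ + X = _]big1 ?addr0; last first.
  by move=> i /andP[/andP[h1 h2] _]; apply: hz.
rewrite [X in _ = X + _]big_nat_cond [X in _ = X + _]big1 ?add0r; last first.
  by move=> i /andP[/andP[h1 h2] _]; rewrite ltnNge -ltnS h2.
apply: eq_big_nat => i /andP[h1 h2].
by rewrite h1.
Qed.

Lemma shiftJ (h : nat -> S) l : (l < n.+1)%N ->
  \sum_(j < n.+1) (if (l <= j)%N then h j else 0) =
  \sum_(b < n.+2) (if (l < n.+1 - b)%N then h (b + l)%N else 0).
Proof.
move=> hl.
rewrite -(big_mkord xpredT (fun j => if (l <= j)%N then h j else 0)).
rewrite -(big_mkord xpredT (fun b => if (l < n.+1 - b)%N then h (b + l)%N else 0)).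
rewrite (big_cat_nat (n := l) (m := 0)); last by lia. 2: by lia.
rewrite [X in _ = X](big_cat_nat (n := n.+1 - l) (m := 0) (p := n.+2)); last by lia. 2: by lia.
rewrite /=.
rewrite [X in X + _ = _]big_nat_cond [X in X + _ = _]big1 ?add0r; last first.
  by move=> i /andP[/andP[h1 h2] _]; rewrite leqNgt h2.
rewrite [X in _ = _ + X]big_nat_cond [X in _ = _ + X]big1 ?addr0; last first.
  by move=> i /andP[/andP[h1 h2] _]; have -> : (l < n.+1 - i)%N = false by lia.
rewrite (@eq_big_nat _ _ _ l n.+1 _ h); last by move=> i /andP[h1 _]; rewrite h1.
have := big_addn 0 n.+1 l xpredT h; rewrite add0n => ->.
apply: eq_big_nat => i /andP[h1 h2].
by have -> : (l < n.+1 - i)%N by lia.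
Qed.

Lemma X1 (f g : nat -> S) : (forall a, (n.+1 < a)%N -> f a = 0) ->
  \sum_(i < n.+1) \sum_(j < n.+1) \sum_(l < n.+1)
     f (i + l + 1)%N * (if (l <= j)%N then g (j - l)%N else 0) * UU i * QQ j
  = \sum_(a < n.+2) \sum_(b < n.+2) f a * g b * S1 a b.
Proof.
move=> hf.
transitivity (\sum_(l < n.+1) \sum_(a < n.+2) \sum_(b < n.+2)
   (if (l < a)%N && (l < n.+1 - b)%N then f a * g b * (UU (a - 1 - l) * QQ (b + l)) else 0)).
  under eq_bigr => i _ do rewrite exchange_big.
  rewrite exchange_big /=; apply: eq_bigr => l _.
  transitivity ((\sum_(i < n.+1) (f (i + l.+1)%N * UU (i + l.+1 - 1 - l))) *
    (\sum_(j < n.+1) (if (l <= j)%N then g (j - l)%N * QQ j else 0))).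
    rewrite big_distrlr /=; apply: eq_bigr => i _; apply: eq_bigr => j _.
    have -> : (i + l.+1 - 1 - l = i)%N by lia.
    rewrite addn1 addnS; case: ifP => _; ring.
  rewrite (shiftI (h := fun a => f a * UU (a - 1 - l)) (ltn_ord l)); last first.
    by move=> a ha; rewrite hf // mul0r.
  rewrite (shiftJ (fun j => g (j - l)%N * QQ j) (ltn_ord l)).
  rewrite big_distrlr /=; apply: eq_bigr => a _; apply: eq_bigr => b _.
  rewrite addnK; case: ifP => ha; case: ifP => hb /=; rewrite ?mulr0 ?mul0r //; ring.
rewrite exchange_big /=; apply: eq_bigr => a _.
rewrite exchange_big /=; apply: eq_bigr => b _.
rewrite /S1 mulr_sumr (big_ord_widen n.+1 (fun l => f a * g b * (UU (a - 1 - l) * QQ (b + l)))); last first.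
  by rewrite geq_min; apply/orP; right; apply: leq_subr.
rewrite [RHS]big_mkcond /=; apply: eq_bigr => l _.
by rewrite leq_min.
Qed.

Definition Bz (f g : nat -> S) i j := \sum_(l < n.+1)
  (f (i + l + 1)%N * (if (l <= j)%N then g (j - l)%N else 0) -
   g (i + l + 1)%N * (if (l <= j)%N then f (j - l)%N else 0)).

Lemma bez (f g : nat -> S) : (forall a, (n.+1 < a)%N -> f a = 0) ->
  (forall a, (n.+1 < a)%N -> g a = 0) ->
  (u * q - v * p) * \sum_(i < n.+1) \sum_(j < n.+1) Bz f g i j * UU i * QQ j =
  (\sum_(a < n.+2) f a * UP a) * (\sum_(b < n.+2) g b * QP b) -
  (\sum_(a < n.+2) f a * QP a) * (\sum_(b < n.+2) g b * UP b).
Proof.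
move=> hf hg.
have -> : \sum_(i < n.+1) \sum_(j < n.+1) Bz f g i j * UU i * QQ j =
  \sum_(a < n.+2) \sum_(b < n.+2) f a * g b * (S1 a b - S1 b a).
  transitivity ((\sum_(i < n.+1) \sum_(j < n.+1) \sum_(l < n.+1)
     f (i + l + 1)%N * (if (l <= j)%N then g (j - l)%N else 0) * UU i * QQ j) -
    (\sum_(i < n.+1) \sum_(j < n.+1) \sum_(l < n.+1)
     g (i + l + 1)%N * (if (l <= j)%N then f (j - l)%N else 0) * UU i * QQ j)).
    rewrite -sumrB; apply: eq_bigr => i _; rewrite -sumrB; apply: eq_bigr => j _.
    rewrite /Bz !mulr_suml -sumrB; apply: eq_bigr => l _; by rewrite !mulrBl.
  rewrite (X1 g hf) (X1 f hg) [X in _ - X]exchange_big /= -sumrB.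
  apply: eq_bigr => a _; rewrite -sumrB; apply: eq_bigr => b _.
  by rewrite mulrBr (mulrC (g b)).
rewrite mulr_sumr big_distrlr big_distrlr -sumrB.
apply: eq_bigr => a _; rewrite mulr_sumr -sumrB; apply: eq_bigr => b _.
rewrite mulrCA (pairS (ltn_ord a) (ltn_ord b)).
generalize (UP a) (UP b) (QP a) (QP b) (f a) (g b) => A B C D F G /=; ring.
Qed.

End Gen.


Section Gen2.
Variable S : comPzRingType.
Variable n : nat.

Definition tau (c : nat -> S) a := \sum_(k < a.+1) c k *+ 'C(n.+1 - k, a - k).

Lemma sum_geq (h : nat -> S) k M : (k <= M)%N ->
  \sum_(a < M | (k < a.+1)%N) h a = \sum_(m < M - k) h (m + k)%N.
Proof.
move=> hk.
rewrite big_mkcond /=.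
rewrite -(big_mkord xpredT (fun a => if (k < a.+1)%N then h a else 0)).
rewrite -(big_mkord xpredT (fun m => h (m + k)%N)).
rewrite (big_cat_nat (n := k) (m := 0)); last by lia. 2: by lia.
rewrite /=.
rewrite [X in X + _ = _]big_nat_cond [X in X + _ = _]big1 ?add0r; last first.
  by move=> i /andP[/andP[h1 h2] _]; rewrite ltnS leqNgt h2.
rewrite (@eq_big_nat _ _ _ k M _ h); last by move=> i /andP[h1 _]; rewrite ltnS h1.
by have := big_addn 0 M k xpredT h; rewrite add0n => ->.
Qed.

Lemma Fh_tau (c : nat -> S) (u v : S) :
  \sum_(a < n.+2) tau c a * (u ^+ a * v ^+ (n.+1 - a)) =
  \sum_(k < n.+2) c k * u ^+ k * (u + v) ^+ (n.+1 - k).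
Proof.
transitivity (\sum_(a < n.+2) \sum_(k < n.+2) if (k < a.+1)%N then
    c k *+ 'C(n.+1 - k, a - k) * (u ^+ a * v ^+ (n.+1 - a)) else 0).
  apply: eq_bigr => a _; rewrite /tau mulr_suml.
  by rewrite (big_ord_widen n.+2 (fun k => c k *+ 'C(n.+1 - k, a - k) * (u ^+ a * v ^+ (n.+1 - a)))) // big_mkcond.
rewrite exchange_big /=; apply: eq_bigr => k _.
rewrite -big_mkcond /=.
rewrite (sum_geq (fun a => c k *+ 'C(n.+1 - k, a - k) * (u ^+ a * v ^+ (n.+1 - a)))); last first.
  exact: ltnW.
rewrite addrC exprDn mulr_sumr.
have -> : (n.+2 - k = (n.+1 - k).+1)%N by have := ltn_ord k; lia.
apply: eq_bigr => m _.
have -> : (m + k - k = m)%N by lia.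
have -> : (n.+1 - (m + k) = n.+1 - k - m)%N by lia.
rewrite exprD; rewrite ?mulrnAl ?mulrnAr. congr (_ *+ _); ring.
Qed.

End Gen2.


Section Vieta.
Variable (R : fieldType) (n : nat) (x : 'I_n.+1 -> R).

Definition Wp : {poly R} := \prod_(i < n.+1) ('X - (x i)%:P).

Lemma coefW k : (k <= n.+1)%N ->
  Wp`_k = (-1) ^+ (n.+1 - k) * esym x (n.+1 - k).
Proof.
move=> nle; rewrite /Wp.
under eq_bigr => i _ do rewrite addrC -raddfN/=.
rewrite bigA_distr /= coef_sum.
transitivity (\sum_(I in {set 'I_n.+1}) if #|I| == (n.+1 - k)%N then
                  \prod_(i < n.+1 | i \in I) - x i else 0).
  apply eq_bigr => I _.
  rewrite big_if/= big_const iter_mulr_1 -rmorph_prod/= coefCM coefXn.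
  rewrite -[#|I| == _](eqn_add2r k) subnK//.
  rewrite -[X in (_ + _)%N == X]card_ord -(cardC I) eqn_add2l.
  by case: ifP; rewrite ?mulr1 ?mulr0.
rewrite -big_mkcond mulr_sumr/= /esym; apply: eq_big => [I|I /eqP <-].
  by [].
by rewrite prodrN.
Qed.

Lemma sizeW : size Wp = n.+2.
Proof. by rewrite /Wp size_prod_XsubC /index_enum unlock -enumT -cardT card_ord. Qed.

Lemma coefW0 k : (n.+1 < k)%N -> Wp`_k = 0.
Proof. by move=> hk; rewrite nth_default // sizeW. Qed.

End Vieta.


Section Entries.
Variable (R : fieldType) (n : nat) (x : 'I_n.+1 -> R).

Definition cc k := (Wp x)`_k.
Definition ff := tau n cc.
Definition gg (b : nat) : R := ('C(n.+1, b))%:R.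

Lemma cz k : (k <= n.+1)%N ->
  signz R (n%:Z - k%:Z + 1) * esymz x (n%:Z - k%:Z + 1) = cc k.
Proof.
move=> hk; have -> : n%:Z - k%:Z + 1 = Posz (n.+1 - k) by lia.
by rewrite /signz /esymz -exprnP /cc coefW.
Qed.

Lemma Ht_entry (i l : 'I_n.+1) : Htmx x i l = ff (i + l + 1)%N.
Proof.
rewrite mxE /ff /tau; apply: eq_bigr => k _.
have hk1 : (k < (i + l + 1).+1)%N := ltn_ord k.
case: (leqP k n.+1) => hk.
  case: (leqP (i + l) n) => hil.
    have -> : n%:Z - i%:Z - l%:Z = Posz (n - i - l) by lia.
    have -> : n%:Z - k%:Z + 1 = Posz (n.+1 - k) by lia.
    rewrite /binz.
    have -> : (n - i - l = n.+1 - k - (i + l + 1 - k))%N by lia.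
    rewrite bin_sub; last by lia.
    rewrite -(cz hk); have -> : n%:Z - k%:Z + 1 = Posz (n.+1 - k) by lia.
    by rewrite mulrAC mulr_natr.
  case E: (n%:Z - i%:Z - l%:Z) => [m|m]; first by exfalso; lia.
  have -> : n%:Z - k%:Z + 1 = Posz (n.+1 - k) by lia.
  rewrite /binz /= mulr0 mul0r bin_small ?mulr0n //; lia.
case E: (n%:Z - k%:Z + 1) => [m|m]; first by exfalso; lia.
by rewrite /esymz mulr0 /cc coefW0 // mul0rn.
Qed.

Lemma Tt_entry (l j : 'I_n.+1) :
  Ttmx x l j = if (l <= j)%N then ff (j - l)%N else 0.
Proof.
rewrite mxE; case: leqP => hlj; last first.
  by rewrite big1 // => k hk; exfalso; lia.
rewrite (eq_bigl (fun k : 'I_n.+1 => (k < (j - l).+1)%N)); last first.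
  by move=> k /=; apply/idP/idP => h; lia.
have hle : ((j - l).+1 <= n.+1)%N by have := ltn_ord j; lia.
rewrite (big_ord_narrow hle) /ff /tau; apply: eq_bigr => k _ /=.
have hk : (k <= n.+1)%N by have := ltn_ord k; lia.
have -> : j%:Z - l%:Z - k%:Z = Posz (j - l - k) by have := ltn_ord k; lia.
rewrite -(cz hk); have -> : n%:Z - k%:Z + 1 = Posz (n.+1 - k) by lia.
by rewrite /binz mulrAC mulr_natr.
Qed.

Lemma T_entry (l j : 'I_n.+1) :
  Tmx R n l j = if (l <= j)%N then gg (j - l)%N else 0.
Proof.
rewrite mxE; case: leqP => hlj.
  by have -> : j%:Z - l%:Z = Posz (j - l) by lia.
by case E: (j%:Z - l%:Z) => [m|m] //; exfalso; lia.
Qed.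

Lemma H_entry (i l : 'I_n.+1) : Hmx R n i l = gg (i + l + 1)%N.
Proof. by rewrite mxE. Qed.

Lemma Mm_entry (i j : 'I_n.+1) :
  (Htmx x *m Tmx R n - Hmx R n *m Ttmx x) i j = Bz n ff gg i j.
Proof.
set A := Htmx x; set B := Tmx R n; set C := Hmx R n; set D := Ttmx x.
rewrite !mxE /Bz -sumrB; apply: eq_bigr => l _.
by rewrite /A /B /C /D Ht_entry T_entry H_entry Tt_entry.
Qed.

Lemma ff0 a : (n.+1 < a)%N -> ff a = 0.
Proof.
move=> ha; rewrite /ff /tau big1 // => k _.
case: (leqP k n.+1) => hk.
  by rewrite bin_small ?mulr0n //; have := ltn_ord k; lia.
by rewrite /cc coefW0 // mul0rn.
Qed.

Lemma gg0 a : (n.+1 < a)%N -> gg a = 0.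
Proof. by move=> ha; rewrite /gg bin_small. Qed.

End Entries.


Lemma sum_binom (S : comPzRingType) n (u v : S) :
  \sum_(b < n.+2) ('C(n.+1, b))%:R * UP n u v b = (u + v) ^+ n.+1.
Proof.
rewrite addrC exprDn; apply: eq_bigr => b _.
by rewrite /UP mulr_natl mulrC.
Qed.

Lemma BzP (R : fieldType) n (f g : nat -> R) i j :
  (Bz n f g i j)%:P = Bz n (fun k => (f k)%:P) (fun k => (g k)%:P) i j.
Proof.
rewrite /Bz rmorph_sum; apply: eq_bigr => l _.
by rewrite rmorphB !rmorphM /=; case: ifP; rewrite ?rmorph0.
Qed.

Lemma tauP (R : fieldType) n (c : nat -> R) a :
  (tau n c a)%:P = tau n (fun k => (c k)%:P) a.
Proof. by rewrite /tau rmorph_sum; apply: eq_bigr => k _; rewrite rmorphMn. Qed.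

Section Key.
Variable (R : fieldType) (n : nat) (x : 'I_n.+1 -> R).

Lemma Wp_expand : \sum_(k < n.+2) (cc x k)%:P * 'X ^+ k = Wp x.
Proof.
rewrite -[RHS]coefK poly_def sizeW; apply: eq_bigr => k _.
by rewrite mul_polyC.
Qed.

Lemma Wp_horner (y : R) : \sum_(k < n.+2) cc x k * y ^+ k = (Wp x).[y].
Proof. by rewrite horner_coef sizeW. Qed.

Lemma key (a : 'I_n.+1) :
  \sum_(i < n.+1) \sum_(j < n.+1)
    (Bz n (ff x) (gg R n) i j)%:P * UU n (x a)%:P (1 - x a)%:P i * QQ n 'X (1 - 'X) j
  = \prod_(i < n.+1 | i != a) ('X - (x i)%:P).
Proof.
under eq_bigr => i _ do under eq_bigr => j _ do rewrite BzP.
have hne : (x a)%:P - 'X != 0 :> {poly R}.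
  by rewrite -opprB oppr_eq0 polyXsubC_eq0.
apply: (mulfI hne).
have e1 : (x a)%:P - 'X = (x a)%:P * (1 - 'X) - (1 - x a)%:P * 'X :> {poly R}.
  by rewrite rmorphB rmorph1 /=; ring.
have hf : forall k, (n.+1 < k)%N -> (ff x k)%:P = 0 :> {poly R}.
  by move=> k hk; rewrite ff0 // rmorph0.
have hg : forall k, (n.+1 < k)%N -> (gg R n k)%:P = 0 :> {poly R}.
  by move=> k hk; rewrite gg0 // rmorph0.
rewrite {1}e1 (bez _ _ _ _ hf hg).
have hgP : forall b, (gg R n b)%:P = ('C(n.+1, b))%:R :> {poly R}.
  by move=> b; rewrite /gg rmorph_nat.
have G : forall w z : {poly R}, \sum_(b < n.+2) (gg R n b)%:P * UP n w z b = (w + z) ^+ n.+1.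
  by move=> w z; under eq_bigr => b _ do rewrite hgP; exact: sum_binom.
have G' : forall w z : {poly R}, \sum_(b < n.+2) (gg R n b)%:P * QP n w z b = (w + z) ^+ n.+1.
  by move=> w z; exact: G.
have F : forall w z : {poly R}, \sum_(b < n.+2) (ff x b)%:P * UP n w z b =
    \sum_(k < n.+2) (cc x k)%:P * w ^+ k * (w + z) ^+ (n.+1 - k).
  by move=> w z; under eq_bigr => b _ do rewrite /ff tauP; exact: Fh_tau.
have F' : forall w z : {poly R}, \sum_(b < n.+2) (ff x b)%:P * QP n w z b =
    \sum_(k < n.+2) (cc x k)%:P * w ^+ k * (w + z) ^+ (n.+1 - k).
  by move=> w z; exact: F.
rewrite G G' F F'.
have -> : (x a)%:P + (1 - x a)%:P = 1 :> {poly R} by rewrite -rmorphD addrC subrK rmorph1.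
have -> : 'X + (1 - 'X) = 1 :> {poly R} by rewrite addrC subrK.
under eq_bigr => k _ do rewrite expr1n mulr1 -rmorphXn -rmorphM.
under [in X in _ - X * _]eq_bigr => k _ do rewrite expr1n mulr1.
rewrite -rmorph_sum Wp_horner Wp_expand !expr1n !mulr1.
have -> : (Wp x).[x a] = 0.
  by rewrite /Wp horner_prod (bigD1 a) //= hornerXsubC subrr mul0r.
rewrite rmorph0 ?mul0r sub0r /Wp (bigD1 a) //= -mulNr opprB. done.
Qed.


End Key.


Section Final.
Variable (R : fieldType) (n : nat) (x : 'I_n.+1 -> R).

Lemma VMV : BVt x *m (Htmx x *m Tmx R n - Hmx R n *m Ttmx x) *m (BVt x)^T = Dmx x.
Proof.
apply/matrixP => a b.
set M := (Htmx x *m Tmx R n - Hmx R n *m Ttmx x).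
rewrite [LHS]mxE.
transitivity (\sum_(i < n.+1) \sum_(j < n.+1) Bz n (ff x) (gg R n) i j *
   (x a ^+ i * (1 - x a) ^+ (n - i)) * (x b ^+ j * (1 - x b) ^+ (n - j))).
  rewrite exchange_big /=; apply: eq_bigr => j _.
  rewrite !mxE mulr_suml; apply: eq_bigr => i _.
  have := Mm_entry x i j; rewrite -/M => ->. rewrite mxE; ring.
transitivity ((\sum_(i < n.+1) \sum_(j < n.+1)
    (Bz n (ff x) (gg R n) i j)%:P * UU n (x a)%:P (1 - x a)%:P i * QQ n 'X (1 - 'X) j).[x b]).
  rewrite horner_sum; apply: eq_bigr => i _; rewrite horner_sum; apply: eq_bigr => j _.
  by rewrite /UU /QQ !hornerE.
rewrite key horner_prod /Dmx !mxE eq_sym; case: eqP => [->|hab].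
  by rewrite mulr1n; apply: eq_bigr => i _; rewrite hornerXsubC.
rewrite mulr0n (bigD1 b) /=; last by apply/eqP.
by rewrite hornerXsubC subrr mul0r.
Qed.

End Final.

Theorem theorem2p7 (R : realFieldType) (n : nat) (x : 'I_n.+1 -> R) :
  0 <= x ord0 ->
  (forall i j : 'I_n.+1, (i < j)%N -> x i < x j) ->
  x ord_max <= 1 ->
  invmx (BV x) =
    invmx (Deltamx R n) *m
      (Htmx x *m Tmx R n - Hmx R n *m Ttmx x) *m (BVt x)^T *m invmx (Dmx x).
Proof.
move=> _ hinc _.
have hinj : forall i j : 'I_n.+1, i != j -> x i - x j != 0.
  move=> i j hij; rewrite subr_eq0; case: (ltngtP i j) => h.
  - by rewrite lt_eqF // hinc.
  - by rewrite gt_eqF // hinc.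
  - by exfalso; move/eqP: hij; apply; apply: val_inj.
have hD : Dmx x \in unitmx.
  rewrite unitmxE det_diag unitfE prodf_seq_neq0; apply/allP => i _ /=.
  rewrite mxE prodf_seq_neq0; apply/allP => j _ /=; apply/implyP => hji.
  by apply: hinj; rewrite eq_sym.
have hDe : Deltamx R n \in unitmx.
  rewrite unitmxE det_diag unitfE prodf_seq_neq0; apply/allP => i _ /=.
  by rewrite mxE pnatr_eq0 -lt0n bin_gt0 -ltnS ltn_ord.
have hBV : BV x = BVt x *m Deltamx R n.
  by apply/matrixP => i j; rewrite mul_mx_diag !mxE; ring.
set Z := invmx (Deltamx R n) *m _ *m _ *m _.
have hZ : BV x *m Z = 1%:M.
  rewrite hBV /Z !mulmxA -(mulmxA (BVt x)) mulmxV // mulmx1 VMV mulmxV //.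
have [hU _] := mulmx1_unit hZ.
by rewrite -[LHS]mulmx1 -hZ mulmxA mulVmx // mul1mx.
Qed.
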